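(* For every positive integer $n$, \[ \sum_{i=1}^{n}2^{\omega(i)}=\sum_{1\leq i^{2}\leq n}\mu(i)\,D_{2}\!\left(\left\lfloor\frac{n}{i^{2}}\right\rfloor\right)=2n-1+2\sum_{1<i^{2}<n}\left(\varphi\!\left(\left\lfloor\frac{n}{i}\right\rfloor,i\right)-\varphi(i)\right), \] where the sums on the right run over positive integers $i$ satisfying the indicated conditions.
   Context: $\omega(i)$ is the number of distinct prime divisors of $i$; $\mu$ is the Möbius function; $D_{2}(m)$ is the number of ordered pairs $(a,b)$ of positive integers with $ab\leq m$ (equivalently $D_{2}(m)=\sum_{j\leq m}\tau(j)$ with $\tau$ the number-of-divisors function); for real $x$ and positive integer $a$, $\varphi(x,a)$ is the number of positive integers not exceeding $x$ that are relatively prime to $a$, and $\varphi(a)=\varphi(a,a)$ is Euler's totient function. *)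

(* Defs.v *)
From mathcomp Require Import all_boot all_order all_algebra.
Set Implicit Arguments. Unset Strict Implicit. Unset Printing Implicit Defensive.
Import GRing.Theory Num.Theory.

Definition omega (n : nat) : nat := size (primes n).

(* Moebius function (as an integer): for n >= 1,
   mu n = (-1)^omega(n) if n is squarefree, 0 otherwise.  (mu 0 := 0.) *)
Definition squarefree (n : nat) : bool :=
  (0 < n) && all (fun p => logn p n == 1) (primes n).
Definition mobius (n : nat) : int :=
  if squarefree n then ((-1) ^+ omega n)%R else 0%R.

Definition D2 (m : nat) : nat :=
  \sum_(1 <= a < m.+1) \sum_(1 <= b < m.+1) (a * b <= m).

Definition phi2 (m a : nat) : nat := \sum_(1 <= k < m.+1) coprime k a.

(* Main.v *)
Require Import Defs.
From mathcomp Require Import all_boot all_order all_algebra.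
From mathcomp Require Import zify.
Import GRing.Theory Num.Theory.

Lemma gcd_mul_split d m n : coprime m n -> d %| m * n ->
  d = gcdn d m * gcdn d n.
Proof.
move=> cmn dmn; apply/eqP; rewrite eqn_dvd; apply/andP; split.
  have h1 : d %| gcdn d m * n.
    by rewrite muln_gcdl dvdn_gcd dvdn_mulr.
  have h2 : d %| gcdn d m * d by rewrite dvdn_mull.
  have := dvdn_gcd d (gcdn d m * n) (gcdn d m * d); rewrite h1 h2 /= -muln_gcdr.
  rewrite [gcdn n d]gcdnC; exact.
rewrite Gauss_dvd ?dvdn_gcdl //.
apply: (coprime_dvdl (dvdn_gcdr _ _)); apply: (coprime_dvdr (dvdn_gcdr _ _)) => //.
Qed.

Lemma divisorsM m n : 0 < m -> 0 < n -> coprime m n ->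
  perm_eq (divisors (m * n)) [seq a * b | a <- divisors m, b <- divisors n].
Proof.
move=> m0 n0 cmn; apply: uniq_perm; first exact: divisors_uniq.
  apply: allpairs_uniq; try exact: divisors_uniq.
  move=> [a b] [a' b'] /allpairsP [[x y] [/= xm yn [-> ->]]]
     /allpairsP [[x' y'] [/= xm' yn' [-> ->]]] /= e.
  rewrite -!dvdn_divisors // in xm yn xm' yn'.
  have ga : forall u v, u %| m -> v %| n -> gcdn (u * v) m = u.
    move=> u v um vn; rewrite gcdnC Gauss_gcdl; first exact/gcdn_idPr.
    by rewrite coprime_sym; apply: coprime_dvdl vn _; rewrite coprime_sym.
  have gb : forall u v, u %| m -> v %| n -> gcdn (u * v) n = v.
    move=> u v um vn; rewrite gcdnC Gauss_gcdr; first exact/gcdn_idPr.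
    by apply: coprime_dvdr um _; rewrite coprime_sym.
  by congr pair; [rewrite -(ga x y) // e ga | rewrite -(gb x y) // e gb].
move=> d; rewrite -dvdn_divisors ?muln_gt0 ?m0 //; apply/idP/allpairsP.
  move=> dmn; exists (gcdn d m, gcdn d n); rewrite -!dvdn_divisors //.
  by rewrite !dvdn_gcdr; split => //; apply: gcd_mul_split.
by move=> [[a b] [/= am bn ->]]; rewrite -!dvdn_divisors // in am bn; apply: dvdn_mul.
Qed.

Lemma big_divisorsM R (idx : R) (op : Monoid.com_law idx) (F : nat -> R) m n :
  0 < m -> 0 < n -> coprime m n ->
  \big[op/idx]_(d <- divisors (m * n)) F d =
  \big[op/idx]_(a <- divisors m) \big[op/idx]_(b <- divisors n) F (a * b).
Proof.
move=> m0 n0 cmn; rewrite (perm_big _ (@divisorsM m n m0 n0 cmn)).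
by rewrite big_allpairs_dep.
Qed.

Lemma mult_ind (P : nat -> Prop) : P 1 ->
  (forall p k, prime p -> 0 < k -> P (p ^ k)) ->
  (forall m n, 0 < m -> 0 < n -> coprime m n -> P m -> P n -> P (m * n)) ->
  forall n, 0 < n -> P n.
Proof.
move=> P1 Pp PM n; move: {2}n.+1 (ltnSn n) => N; elim: N n => [|N IH] n //.
rewrite ltnS => nN n0.
have [n1|n1] := leqP n 1; first by have -> : n = 1 by lia.
set p := pdiv n; have pp : prime p by apply: pdiv_prime.
rewrite -(partnC p n0); apply: PM; rewrite ?part_gt0 ?coprime_partC //.
  rewrite p_part; apply: Pp => //; rewrite logn_gt0 mem_primes pp n0.
  exact: pdiv_dvd.
apply: IH; last exact: part_gt0.
have h1 : 1 < n`_p by rewrite p_part_gt1 mem_primes pp n0 pdiv_dvd.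
have h2 := partnC p n0.
have h3 : 0 < n`_p^' by apply: part_gt0.
have : n`_p^' < n by rewrite -{2}h2 mulnC ltn_Pmulr.
by move=> h; apply: leq_trans h nN.
Qed.

Lemma divisors_pexp p k : prime p ->
  perm_eq (divisors (p ^ k)) [seq p ^ j | j <- iota 0 k.+1].
Proof.
move=> pp; have p1 := prime_gt1 pp.
apply: uniq_perm; first exact: divisors_uniq.
  rewrite map_inj_uniq ?iota_uniq // => i j /eqP; rewrite eqn_exp2l //.
  by move/eqP.
move=> d; rewrite -dvdn_divisors ?expn_gt0 ?prime_gt0 //.
apply/dvdn_pfactor/mapP => // -[j].
  by move=> jk ->; exists j => //; rewrite mem_iota /= add0n ltnS.
by rewrite mem_iota add0n ltnS => /andP[_ jk] ->; exists j.
Qed.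

Lemma big_divisors_pexp R (idx : R) (op : Monoid.com_law idx) (F : nat -> R) p k :
  prime p ->
  \big[op/idx]_(d <- divisors (p ^ k)) F d = \big[op/idx]_(0 <= j < k.+1) F (p ^ j).
Proof.
by move=> pp; rewrite (perm_big _ (@divisors_pexp p k pp)) big_map.
Qed.

Lemma primesM_perm m n : 0 < m -> 0 < n -> coprime m n ->
  perm_eq (primes (m * n)) (primes m ++ primes n).
Proof.
move=> m0 n0 cmn; apply: uniq_perm; first exact: primes_uniq.
  rewrite cat_uniq !primes_uniq /= andbT; apply/hasPn => p pn; apply/negP => pm.
  rewrite mem_primes in pm; rewrite mem_primes in pn.
  case/and3P: pm => pp _ pdm; case/and3P: pn => _ _ pdn.
  have : p %| gcdn m n by rewrite dvdn_gcd pdm.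
  by rewrite (eqP cmn) dvdn1 => /eqP p1; rewrite p1 in pp.
by move=> p; rewrite mem_cat primesM.
Qed.

Lemma omegaM m n : 0 < m -> 0 < n -> coprime m n -> omega (m * n) = omega m + omega n.
Proof.
by move=> m0 n0 cmn; rewrite /omega (perm_size (@primesM_perm m n m0 n0 cmn)) size_cat.
Qed.

Lemma omega_pexp p k : prime p -> 0 < k -> omega (p ^ k) = 1.
Proof. by move=> pp k0; rewrite /omega primesX // primes_prime. Qed.

Lemma squarefreeM m n : 0 < m -> 0 < n -> coprime m n ->
  squarefree (m * n) = squarefree m && squarefree n.
Proof.
move=> m0 n0 cmn; rewrite /squarefree muln_gt0 m0 n0 /=.
rewrite (perm_all _ (@primesM_perm m n m0 n0 cmn)) all_cat; congr andb.
  apply: eq_in_all => p pm; rewrite lognM // (_ : logn p n = 0) ?addn0 //.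
  apply/eqP; rewrite -leqn0 leqNgt logn_gt0; apply/negP => pn.
  have := @primesM_perm m n m0 n0 cmn; move/perm_uniq; rewrite primes_uniq cat_uniq.
  by move/esym => /and3P[_ /hasPn /(_ p pn) /negP]; rewrite pm.
apply: eq_in_all => p pn; rewrite lognM // (_ : logn p m = 0) ?add0n //.
apply/eqP; rewrite -leqn0 leqNgt logn_gt0; apply/negP => pm.
have := @primesM_perm m n m0 n0 cmn; move/perm_uniq; rewrite primes_uniq cat_uniq.
by move/esym => /and3P[_ /hasPn /(_ p pn) /negP]; rewrite pm.
Qed.

Lemma mobiusM m n : 0 < m -> 0 < n -> coprime m n ->
  mobius (m * n) = (mobius m * mobius n)%R.
Proof.
move=> m0 n0 cmn; rewrite /mobius squarefreeM // omegaM //.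
case: (squarefree m); case: (squarefree n) => /=; rewrite ?mulr0 ?mul0r //.
by rewrite exprD.
Qed.

Lemma mobius_pexp p j : prime p ->
  mobius (p ^ j) = if j == 0 then 1%R else if j == 1 then (-1)%R else 0%R.
Proof.
move=> pp; case: j => [|j]; first by rewrite expn0 /mobius /squarefree.
rewrite /mobius /squarefree expn_gt0 prime_gt0 //= primesX // primes_prime //=.
rewrite pfactorK // andbT omega_pexp //.
Qed.

Lemma dvd_coprime_div a b m n : a %| m -> b %| n -> coprime m n -> coprime a b.
Proof.
move=> am bn cmn; apply: (coprime_dvdl am); exact: (coprime_dvdr bn).
Qed.

Lemma mobius_sum n : 0 < n ->
  (\sum_(d <- divisors n) mobius d)%R = Posz (n == 1).
Proof.
move: n; apply: mult_ind.
- by rewrite /divisors /= big_cons big_nil addr0.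
- move=> p k pp k0; rewrite big_divisors_pexp // big_ltn // big_ltn //.
  rewrite !mobius_pexp //= big1_seq ?addr0 ?subrr.
    suff : p ^ k != 1 by move/negPf => ->.
    by rewrite -(expn0 p) eqn_exp2l ?prime_gt1 // -lt0n.
  move=> j /andP[_]; rewrite mem_index_iota => /andP[j2 _].
  by rewrite mobius_pexp //; case: j j2 => [|[|j]].
move=> m n m0 n0 cmn Pm Pn; rewrite big_divisorsM //.
rewrite muln_eq1.
transitivity (\sum_(a <- divisors m) \sum_(b <- divisors n) (mobius a * mobius b))%R.
  apply: eq_big_seq => a; rewrite -dvdn_divisors // => am.
  apply: eq_big_seq => b; rewrite -dvdn_divisors // => bn.
  apply: mobiusM; [exact: dvdn_gt0 am|exact: dvdn_gt0 bn|exact: dvd_coprime_div am bn cmn].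
rewrite -big_distrlr /= Pm Pn.
by case: (m == 1); case: (n == 1).
Qed.

Arguments dvd_coprime_div {a b m n}.

Lemma divnMM a b m n : a %| m -> b %| n -> 0 < a -> 0 < b ->
  (m * n) %/ (a * b) = (m %/ a) * (n %/ b).
Proof.
move=> am bn a0 b0; rewrite -{1}(divnK am) -{1}(divnK bn) mulnACA mulnK //.
by rewrite muln_gt0 a0.
Qed.

Lemma div_dvd b n : b %| n -> n %/ b %| n.
Proof. by move=> bn; rewrite -{2}(divnK bn) dvdn_mulr. Qed.

Arguments div_dvd {b n}.

Lemma unitary_count n : 0 < n ->
  \sum_(d <- divisors n) coprime d (n %/ d) = 2 ^ omega n.
Proof.
move: n; apply: mult_ind.
- by rewrite /divisors /= big_cons big_nil.
- move=> p k pp k0; rewrite big_divisors_pexp // omega_pexp //.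
  have p1 := prime_gt1 pp.
  rewrite big_ltn // expn0 divn1 coprime1n.
  rewrite big_nat_recr //= divnn expn_gt0 prime_gt0 // coprimen1.
  rewrite big1_seq ?add0n //.
  move=> j /andP[_]; rewrite mem_index_iota => /andP[j1 jk].
  rewrite -expnB ?prime_gt0 1?ltnW // coprime_pexpl // coprime_pexpr ?subn_gt0 //.
  by rewrite /coprime gcdnn; case: p p1 {pp}=> [|[|p]].
move=> m n m0 n0 cmn Pm Pn; rewrite big_divisorsM // omegaM // expnD -Pm -Pn.
rewrite big_distrlr /=; apply: eq_big_seq => a; rewrite -dvdn_divisors // => am.
apply: eq_big_seq => b; rewrite -dvdn_divisors // => bn.
have a0 := dvdn_gt0 m0 am; have b0 := dvdn_gt0 n0 bn.
rewrite divnMM // mulnb coprimeMl !coprimeMr.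
rewrite (dvd_coprime_div am (div_dvd bn) cmn).
rewrite coprime_sym in cmn.
rewrite (dvd_coprime_div bn (div_dvd am) cmn).
by rewrite andbT andTb.
Qed.

Lemma divisors_range R (idx : R) (op : Monoid.com_law idx) (F : nat -> R) n :
  0 < n ->
  \big[op/idx]_(d <- divisors n) F d = \big[op/idx]_(1 <= d < n.+1 | d %| n) F d.
Proof.
move=> n0; rewrite -[RHS]big_filter; apply: perm_big; apply: uniq_perm.
- exact: divisors_uniq.
- by rewrite filter_uniq // iota_uniq.
move=> d; rewrite mem_filter mem_index_iota -dvdn_divisors //.
case dn: (d %| n) => //=; by rewrite ltnS (dvdn_leq n0 dn) (dvdn_gt0 n0 dn).
Qed.

Lemma sum_single lo hi k (F : nat -> nat) : lo <= k < hi ->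
  \sum_(lo <= b < hi) ((b == k) * F b) = F k.
Proof.
move=> kr; rewrite (bigD1_seq k) ?mem_index_iota ?iota_uniq //= eqxx mul1n.
by rewrite big1 ?addn0 // => b /negPf ->.
Qed.

Lemma sum_widen M K (F : nat -> nat) : M <= K -> (forall x, M < x -> F x = 0) ->
  \sum_(1 <= x < K.+1) F x = \sum_(1 <= x < M.+1) F x.
Proof.
move=> MK F0; rewrite (@big_cat_nat _ _ _ M.+1) //= ?ltnS //.
rewrite [X in _ + X = _]big1_seq ?addn0 // => x /andP[_].
by rewrite mem_index_iota => /andP[h _]; apply: F0.
Qed.

Lemma reindex_dvd d N (F : nat -> nat) : 0 < d ->
  \sum_(1 <= a < N.+1) (if d %| a then F a else 0) = \sum_(1 <= c < (N %/ d).+1) F (d * c).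
Proof.
move=> d0; elim: N => [|N IH]; first by rewrite div0n !big_geq.
rewrite big_nat_recr //= IH divnS //.
case dN: (d %| N.+1); last by rewrite addn0.
rewrite add1n [RHS]big_nat_recr //=; congr (_ + F _).
by rewrite -{1}(divnK dN) divnS // dN add1n mulnC.
Qed.

Lemma D2_widen M K : M <= K ->
  \sum_(1 <= a < K.+1) \sum_(1 <= b < K.+1) (a * b <= M) = D2 M.
Proof.
move=> MK; rewrite /D2 (@sum_widen M K _ MK).
  apply: eq_big_nat => a /andP[a1 _]; apply: sum_widen => // b Mb.
  have : M < a * b by nia.
  by rewrite ltnNge => /negbTE ->.
move=> a Ma; rewrite big1_seq // => b /andP[_]; rewrite mem_index_iota => /andP[b1 _].
have : M < a * b by nia.
by rewrite ltnNge => /negbTE ->.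
Qed.

Lemma T_lemma n d : 0 < d ->
  \sum_(1 <= a < n.+1) \sum_(1 <= b < n.+1) [&& a * b <= n, d %| a & d %| b]
  = D2 (n %/ (d * d)).
Proof.
move=> d0.
transitivity (\sum_(1 <= a < n.+1) (if d %| a then
    \sum_(1 <= b < n.+1) (if d %| b then (a * b <= n) : nat else 0) else 0)).
  apply: eq_bigr => a _; case: (d %| a); last by rewrite big1 // => b _; rewrite andbF.
  by apply: eq_bigr => b _; case: (d %| b); rewrite ?andbT ?andbF.
rewrite reindex_dvd //.
under eq_bigr => c _ do rewrite reindex_dvd //.
rewrite -(@D2_widen (n %/ (d * d)) (n %/ d)); last by rewrite divnMA leq_div.
apply: eq_bigr => c _; apply: eq_bigr => e _.
by rewrite leq_divRL ?muln_gt0 ?d0 // mulnACA [c * e * _]mulnC.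
Qed.

Lemma single_or0 lo hi k c : lo <= k ->
  \sum_(lo <= i < hi) ((i == k) * c) = (k < hi) * c.
Proof.
move=> lk; case: (ltnP k hi) => h.
  by rewrite (@sum_single lo hi k (fun _ => c)) ?lk ?mul1n.
rewrite big1_seq // => i /andP[_]; rewrite mem_index_iota => /andP[_ ih].
by have -> : (i == k) = false by apply/negbTE; rewrite neq_ltn (leq_trans ih h).
Qed.

Lemma pointwise_L n i : 1 <= i <= n ->
  \sum_(1 <= a < n.+1) \sum_(1 <= b < n.+1) ((i == a * b) * coprime a b)
  = 2 ^ omega i.
Proof.
move=> /andP[i1 iN].
rewrite -unitary_count // divisors_range // [RHS]big_mkcond /=.
rewrite (@sum_widen i n) //; last first.
  move=> a ia; rewrite big1 // => b _.
  have -> : (i == a * b) = false; last by [].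
  apply/negbTE/eqP => e; have : a %| i by rewrite e dvdn_mulr.
  by move/(dvdn_leq i1); rewrite leqNgt ia.
apply: eq_big_nat => a /andP[a1 _]; case ai: (a %| i); last first.
  rewrite big1 // => b _; have -> : (i == a * b) = false; last by [].
  by apply/negbTE/eqP => e; move: ai; rewrite e dvdn_mulr.
have ia : i %/ a <= n by apply: leq_trans (leq_div _ _) iN.
have ia1 : 0 < i %/ a by rewrite divn_gt0 // dvdn_leq.
rewrite -(@sum_single 1 n.+1 (i %/ a) (fun b => coprime a b)) ?ia1 ?ltnS //.
apply: eq_big_nat => b _; congr (nat_of_bool _ * _).
by rewrite -{1}(divnK ai) mulnC eqn_pmul2l // eq_sym.
Qed.

Lemma L_lemma n :
  \sum_(1 <= i < n.+1) 2 ^ omega i =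
  \sum_(1 <= a < n.+1) \sum_(1 <= b < n.+1) ((a * b <= n) && coprime a b).
Proof.
transitivity (\sum_(1 <= i < n.+1) \sum_(1 <= a < n.+1) \sum_(1 <= b < n.+1)
                 ((i == a * b) * coprime a b)).
  by apply: eq_big_nat => i /andP[i1 iN]; rewrite pointwise_L // i1 -ltnS.
rewrite exchange_big; apply: eq_big_nat => a /andP[a1 _].
rewrite exchange_big; apply: eq_big_nat => b /andP[b1 _].
by rewrite single_or0 ?muln_gt0 ?a1 // mulnb ltnS.
Qed.

Local Open Scope ring_scope.

Lemma sumz lo hi (F : nat -> nat) :
  Posz (\sum_(lo <= i < hi) F i)%N = \sum_(lo <= i < hi) (F i)%:Z.
Proof. exact: (big_morph Posz PoszD (erefl _)). Qed.

Lemma sum_widenz M K (F : nat -> int) : (M <= K)%N -> (forall x, (M < x)%N -> F x = 0) ->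
  \sum_(1 <= x < K.+1) F x = \sum_(1 <= x < M.+1) F x.
Proof.
move=> MK F0; rewrite (@big_cat_nat _ _ _ M.+1) //= ?ltnS //.
rewrite [X in _ + X = _]big1_seq ?addr0 // => x /andP[_].
by rewrite mem_index_iota => /andP[h _]; apply: F0.
Qed.

Lemma pointwise_P1 n a b : (0 < a)%N -> (a <= n)%N -> (0 < b)%N ->
  Posz ((a * b <= n)%N && coprime a b) =
  \sum_(1 <= d < n.+1) Posz [&& (a * b <= n)%N, (d %| a)%N & (d %| b)%N] * mobius d.
Proof.
move=> a0 an b0; case abn: (a * b <= n)%N; last first.
  by rewrite big1 // => d _; rewrite mul0r.
have g0 : (0 < gcdn a b)%N by rewrite gcdn_gt0 a0.
rewrite /= /coprime -mobius_sum // divisors_range // big_mkcond /=.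
rewrite (@sum_widenz (gcdn a b) n).
- apply: eq_big_nat => d _; rewrite dvdn_gcd.
  by case: (_ && _); rewrite ?mul1r ?mul0r.
- exact: leq_trans (dvdn_leq a0 (dvdn_gcdl a b)) an.
move=> d gd; rewrite -dvdn_gcd.
case dg: (d %| gcdn a b)%N; last by rewrite mul0r.
by move: gd; rewrite ltnNge (dvdn_leq g0 dg).
Qed.

Lemma part1 n : (0 < n)%N ->
  Posz (\sum_(1 <= a < n.+1) \sum_(1 <= b < n.+1) ((a * b <= n) && coprime a b))%N
  = \sum_(1 <= i < n.+1 | (i * i <= n)%N) mobius i * (D2 (n %/ (i * i)))%:Z.
Proof.
move=> n0; rewrite sumz.
transitivity (\sum_(1 <= a < n.+1) \sum_(1 <= b < n.+1) \sum_(1 <= d < n.+1)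
   Posz [&& (a * b <= n)%N, (d %| a)%N & (d %| b)%N] * mobius d).
  apply: eq_big_nat => a /andP[a1 an]; rewrite sumz.
  by apply: eq_big_nat => b /andP[b1 _]; apply: pointwise_P1; rewrite // -ltnS.
under eq_bigr => a _ do rewrite exchange_big /=.
rewrite exchange_big /= [RHS]big_mkcond /=; apply: eq_big_nat => d /andP[d1 _].
transitivity (mobius d * Posz (D2 (n %/ (d * d)))).
  rewrite -(@T_lemma n d d1) sumz mulr_sumr; apply: eq_bigr => a _.
  by rewrite sumz mulr_sumr; apply: eq_bigr => b _; rewrite mulrC.
case: ifP => // dd.
rewrite divn_small ?ltnNge ?dd //.
by rewrite /D2 big_geq // mulr0.
Qed.

Local Close Scope ring_scope.

Definition eterm n a := \sum_(1 <= b < n.+1) [&& a < b, a * b <= n & coprime a b].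

Lemma sym_split n : 0 < n ->
  \sum_(1 <= a < n.+1) \sum_(1 <= b < n.+1) ((a * b <= n) && coprime a b)
  = 1 + 2 * \sum_(1 <= a < n.+1) eterm n a.
Proof.
move=> n0.
have pw : forall a b, ((a * b <= n) && coprime a b : nat) =
   [&& a < b, a * b <= n & coprime a b] + ((b == a) * ((a * b <= n) && coprime a b))
   + [&& b < a, b * a <= n & coprime b a].
  move=> a b; rewrite [b * a]mulnC [coprime b a]coprime_sym.
  by case: (ltngtP a b) => h /=; case: (_ && _).
under eq_bigr => a _ do under eq_bigr => b _ do rewrite pw.
under eq_bigr => a _ do rewrite !big_split /=.
rewrite !big_split /= [X in _ + X]exchange_big /=.
have -> : \sum_(1 <= i < n.+1)
     \sum_(1 <= i0 < n.+1) (i0 == i) * ((i * i0 <= n) && coprime i i0) = 1.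
  transitivity (\sum_(1 <= i < n.+1) ((i == 1) * 1)).
    apply: eq_big_nat => a /andP[a1 an].
    rewrite (@sum_single 1 n.+1 a (fun b => (a * b <= n) && coprime a b)) ?a1 //.
    rewrite /coprime gcdnn; case: eqP => [->|] //=.
    by rewrite muln1 n0.
    by rewrite andbF.
  by apply: (@sum_single 1 n.+1 1 (fun _ => 1)); rewrite ltnS.
rewrite /eterm; lia.
Qed.

Lemma phi2_tot a : 0 < a -> phi2 a a = totient a.
Proof.
move=> a0; rewrite /phi2 totient_count_coprime [RHS]big_ltn // [LHS]big_nat_recr //=.
rewrite /coprime gcdn0 gcdnn addnC; congr (_ + _).
by apply: eq_bigr => k _; rewrite gcdnC.
Qed.

Lemma e_formula n a : 0 < a -> a * a <= n ->
  phi2 (n %/ a) a = phi2 a a + eterm n a.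
Proof.
move=> a0 aa.
have h1 : a <= n %/ a by rewrite leq_divRL.
have h2 : n %/ a <= n by apply: leq_div.
rewrite /phi2 (@big_cat_nat _ _ _ a.+1 1 (n %/ a).+1) //=; congr (_ + _).
rewrite /eterm (@big_cat_nat _ _ _ a.+1 1 n.+1) //= ?ltnS //; last by apply: leq_trans h1 h2.
rewrite [X in _ = X + _]big1_seq ?add0n; last first.
  move=> b /andP[_]; rewrite mem_index_iota => /andP[_ ba].
  by rewrite ltnNge -ltnS ba.
rewrite (@big_cat_nat _ _ _ (n %/ a).+1 a.+1 n.+1) //= ?ltnS //.
rewrite [X in _ = _ + X]big1_seq ?addn0; last first.
  move=> b /andP[_]; rewrite mem_index_iota => /andP[ab _].
  have : ~~ (b <= n %/ a) by rewrite -ltnNge.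
  by rewrite leq_divRL // mulnC => /negbTE ->; rewrite andbF.
apply: eq_big_nat => b /andP[ab bn].
have -> : a < b by [].
have -> : a * b <= n by rewrite mulnC -leq_divRL // -ltnS.
by rewrite coprime_sym.
Qed.

Lemma e_zero n a : 0 < a -> n <= a * a -> eterm n a = 0.
Proof.
move=> a0 na; rewrite /eterm big1 // => b _.
case: (ltnP a b) => //= ab.
have : n < a * b by nia.
by rewrite ltnNge => /negbTE ->.
Qed.

Lemma phi2_one m : phi2 m 1 = m.
Proof.
rewrite /phi2; under eq_bigr do rewrite coprimen1.
by rewrite sum_nat_const_nat subn1 muln1.
Qed.

Local Open Scope ring_scope.

Theorem mainTheorem5 (n : nat) : (0 < n)%N ->
  ((\sum_(1 <= i < n.+1) 2 ^ omega i)%N%:Z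
     = \sum_(1 <= i < n.+1 | (i * i <= n)%N) mobius i * (D2 (n %/ (i * i)))%:Z)
  /\
  ((\sum_(1 <= i < n.+1) 2 ^ omega i)%N%:Z
     = (2 * n - 1)%N%:Z
       + 2 * \sum_(2 <= i < n.+1 | (i * i < n)%N)
               ((phi2 (n %/ i) i)%:Z - (totient i)%:Z)).
Proof.
move=> n0; rewrite L_lemma; split; first exact: part1.
rewrite sym_split //.
have E1 : (\sum_(1 <= a < n.+1) eterm n a = (n - 1) + \sum_(2 <= a < n.+1) eterm n a)%N.
  rewrite big_ltn ?ltnS //; congr (_ + _)%N.
  have := @e_formula n 1 isT; rewrite muln1 => /(_ n0); rewrite divn1 !phi2_one => e.
  lia.
have E2 : Posz (\sum_(2 <= a < n.+1) eterm n a)%N =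
    \sum_(2 <= i < n.+1 | (i * i < n)%N) ((phi2 (n %/ i) i)%:Z - (totient i)%:Z).
  rewrite sumz [RHS]big_mkcond; apply: eq_big_nat => a /andP[a2 _].
  case: ifP => h.
    rewrite -phi2_tot ?(ltnW a2) // e_formula ?(ltnW a2) ?(ltnW h) //.
    by rewrite PoszD addrC addKr.
  by rewrite e_zero ?(ltnW a2) //; move/negbT: h; rewrite -leqNgt.
rewrite E1 -E2; lia.
Qed.
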